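(* Let $\beta\ge1$. For nonzero $x,y\in\mathbb R^m$ (any $m\ge1$) define $$\cos_{(\beta,\infty)}(x,y)=\Big\langle\Big(\frac{x}{\|x\|_\infty}\Big)^{\ominus\beta},\frac{\mathrm{sign}_\infty(y)}{\|\mathrm{sign}_\infty(y)\|_1}\Big\rangle,$$ where the $i$-th component of $\mathrm{sign}_\infty(y)$ is $\mathrm{sign}(y_i)\,\mathbb I(|y_i|=\|y\|_\infty)$. Let $x=(x_0,x_1)$ and $y=(y_0,y_1)$ with $x_0,y_0\in\mathbb R^{d_0}$ and $x_1,y_1\in\mathbb R^{d_1}$, $d=d_0+d_1$. If $\|x_0\|_\infty>\|x_1\|_\infty$ and $\|y_0\|_\infty>\|y_1\|_\infty$, then $\cos_{(\beta,\infty)}(x_0,y_0)=\cos_{(\beta,\infty)}(x,y)$.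
   Context: $\langle\cdot,\cdot\rangle$ is the Euclidean inner product; $\|v\|_\infty=\max_i|v_i|$, $\|v\|_1=\sum_i|v_i|$. For a vector $v$, $v^{\ominus\beta}$ is taken componentwise with $t^{\ominus\beta}=\mathrm{sign}(t)|t|^\beta$, $\mathrm{sign}(0)=0$; $\mathbb I$ is the indicator function. $\cos_{(\beta,\infty)}$ is the limit as $\gamma\to\infty$ of the $(\beta,\gamma)$-cosine $\langle(x/\|x\|_{\beta+\gamma})^{\ominus\beta},(y/\|y\|_{\beta+\gamma})^{\ominus\gamma}\rangle$. *)

(* Defs.v *)
From HB Require Import structures.
From mathcomp Require Import all_boot all_order all_algebra.
From mathcomp Require Import all_classical all_reals all_analysis.
Set Implicit Arguments. Unset Strict Implicit. Unset Printing Implicit Defensive.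
Import Order.TTheory GRing.Theory Num.Theory.
Local Open Scope ring_scope.

Section Defs.
Variable R : realType.

(* ||v||_oo = max_i |v_i| (0 for the empty vector) *)
Definition norminf m (v : 'rV[R]_m) : R := \big[Num.max/0]_(i < m) `|v 0 i|.
Definition norm1 m (v : 'rV[R]_m) : R := \sum_(i < m) `|v 0 i|.
Definition spow (beta t : R) : R := Num.sg t * (`|t| `^ beta).
Definition signinf m (y : 'rV[R]_m) : 'rV[R]_m :=
  \row_(i < m) (Num.sg (y 0 i) * (`|y 0 i| == norminf y)%:R).
Definition cosbinf m (beta : R) (x y : 'rV[R]_m) : R :=
  \sum_(i < m) spow beta (x 0 i / norminf x) * (signinf y 0 i / norm1 (signinf y)).
End Defs.

(* Main.v *)
Require Import Defs.
From HB Require Import structures.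
From mathcomp Require Import all_boot all_order all_algebra.
From mathcomp Require Import all_classical all_reals all_analysis.
Import Order.TTheory GRing.Theory Num.Theory.
Local Open Scope ring_scope.

Lemma norminf_ge0 {R : realType} {m} (v : 'rV[R]_m) : 0 <= norminf v.
Proof. by rewrite /norminf bigmax_idl le_max lexx. Qed.

Lemma norminf_ge {R : realType} {m} (v : 'rV[R]_m) i : `|v 0 i| <= norminf v.
Proof. exact: (le_bigmax _ (fun i => `|v 0 i|)). Qed.

Lemma norminf_row {R : realType} {d0 d1} (x0 : 'rV[R]_d0) (x1 : 'rV[R]_d1) :
  norminf x1 <= norminf x0 -> norminf (row_mx x0 x1) = norminf x0.
Proof.
move=> h; apply: le_anti; apply/andP; split.
  rewrite /norminf; apply: bigmax_le; first exact: norminf_ge0.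
  move=> k _; case: (splitP k) => j hk; [have -> : k = lshift d1 j by apply: val_inj | have -> : k = rshift d0 j by apply: val_inj].
    by rewrite row_mxEl norminf_ge.
  by rewrite row_mxEr (le_trans (norminf_ge _ _)).
rewrite {1}/norminf; apply: bigmax_le; first exact: norminf_ge0.
move=> j _; rewrite -(row_mxEl x0 x1); exact: norminf_ge.
Qed.

Theorem mainTheorem13 (R : realType) (beta : R) (d0 d1 : nat)
  (x0 y0 : 'rV[R]_d0) (x1 y1 : 'rV[R]_d1) :
  1 <= beta ->
  norminf x1 < norminf x0 ->
  norminf y1 < norminf y0 ->
  cosbinf beta x0 y0 = cosbinf beta (row_mx x0 x1) (row_mx y0 y1).
Proof.
move=> _ hx hy.
have ex := norminf_row _ _ (ltW hx); have ey := norminf_row _ _ (ltW hy).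
have sl : forall j, signinf (row_mx y0 y1) 0 (lshift d1 j) = signinf y0 0 j.
  by move=> j; rewrite mxE row_mxEl ey mxE.
have sr : forall j, signinf (row_mx y0 y1) 0 (rshift d0 j) = 0.
  move=> j; rewrite mxE row_mxEr ey.
  have : `|y1 0 j| < norminf y0 by apply: le_lt_trans (norminf_ge _ _) hy.
  by rewrite lt_neqAle => /andP[/negbTE -> _]; rewrite mulr0.
have n1 : norm1 (signinf (row_mx y0 y1)) = norm1 (signinf y0).
  rewrite /norm1 big_split_ord /=.
  rewrite [X in _ + X]big1 ?addr0; last by move=> j _; rewrite sr normr0.
  by apply: eq_bigr => j _; rewrite sl.
rewrite /cosbinf big_split_ord /=.
rewrite [X in _ + X]big1; last by move=> j _; rewrite sr mul0r mulr0.
rewrite addr0; apply: eq_bigr => j _; rewrite sl n1 ex row_mxEl.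
reflexivity.
Qed.
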